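(* For every $n\geq 5$, the alternating group $A_n$ is $D$-realisable but not completely $D$-realisable.
   Context: All groups are finite. $D(H)=H'$ denotes the derived subgroup of $H$. A finite group $G$ is $D$-realisable if there is a finite group $H$ with $G\cong D(H)$. It is completely $D$-realisable if there is a finite group $H$ such that: (i) $G\cong D(H)$; (ii) for every subgroup $G_1\leq G$ there exists $H_1\leq H$ with $G_1\cong D(H_1)$; (iii) for every $H_1\leq H$ there exists $G_1\leq G$ with $D(H_1)\cong G_1$. *)

(* Defs.v *)
From mathcomp Require Import all_boot all_fingroup all_solvable.
Set Implicit Arguments. Unset Strict Implicit. Unset Printing Implicit Defensive.
Local Open Scope group_scope.

Definition D_realisable (gT : finGroupType) (G : {group gT}) : Prop :=
  exists (hT : finGroupType) (H : {group hT}), G \isog H^`(1).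

Definition completely_D_realisable (gT : finGroupType) (G : {group gT}) : Prop :=
  exists (hT : finGroupType) (H : {group hT}),
    [/\ G \isog H^`(1),
        (forall G1 : {group gT}, G1 \subset G ->
           exists2 H1 : {group hT}, H1 \subset H & G1 \isog H1^`(1))
      & (forall H1 : {group hT}, H1 \subset H ->
           exists2 G1 : {group gT}, G1 \subset G & H1^`(1) \isog G1)].

(* Main.v *)
Require Import Defs.
From mathcomp Require Import all_boot all_fingroup all_solvable.
Set Implicit Arguments. Unset Strict Implicit. Unset Printing Implicit Defensive.
Local Open Scope group_scope.

Lemma der1_cent_cyclic (hT : finGroupType) (K P : {group hT}) :
  P <| K -> cyclic P -> K^`(1) \subset 'C(P).
Proof.
case/andP=> _ nPK cycP.
have sK'N : K^`(1) \subset 'N(P) := subset_trans (der_sub 1 K) nPK.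
rewrite -ker_conj_aut /ker -sub_morphim_pre // morphim_der //.
have ab : abelian (conj_aut P @* K).
  exact: abelianS (Aut_conj_aut _ _) (Aut_cyclic_abelian cycP).
by rewrite derg1 (commG1P ab).
Qed.

Lemma no_der (gT hT : finGroupType) (G1 : {group gT}) (K : {group hT}) (s g : gT) :
  cyclic G1^`(1) -> s \in G1 -> g \in G1^`(1) -> s * g != g * s ->
  ~ G1 \isog K^`(1).
Proof.
move=> cyc sG gG' ne /isogP[f injf fG].
have cK2 : cyclic K^`(2).
  rewrite -[K^`(2)]/((K^`(1))^`(1)) -fG -morphim_der //.
  by rewrite injm_cyclic // der_sub.
have := der1_cent_cyclic (der_normal 2 K) cK2.
have sG'G : G1^`(1) \subset G1 := der_sub 1 G1.
have gG := subsetP sG'G g gG'.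
have fs : f s \in K^`(1) by rewrite -fG mem_morphim.
have fg : f g \in K^`(2).
  by rewrite -[K^`(2)]/((K^`(1))^`(1)) -fG -morphim_der // mem_morphim.
move/subsetP/(_ _ fs)/centP/(_ _ fg) => com.
case/negP: ne; apply/eqP; apply: (injmP injf); rewrite ?groupM //.
by rewrite !morphM.
Qed.

Lemma tpermE (T : finType) (x y z : T) :
  tperm x y z = if z == x then y else if z == y then x else z.
Proof. by case: tpermP => [->|->|/eqP/negbTE-> /eqP/negbTE->]; rewrite ?eqxx //; case: eqP. Qed.

Section Conc.
Variable m : nat.
Local Notation T := (ordinal m.+4.+1).
Let x0 : T := @Ordinal m.+4.+1 0 isT.
Let x1 : T := @Ordinal m.+4.+1 1 isT.
Let x2 : T := @Ordinal m.+4.+1 2 isT.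
Let x3 : T := @Ordinal m.+4.+1 3 isT.
Let x4 : T := @Ordinal m.+4.+1 4 isT.
Let c : {perm T} := tperm x0 x1 * tperm x1 x2.
Let s : {perm T} := tperm x0 x1 * tperm x3 x4.

Lemma cAlt : c \in 'Alt_T.
Proof. by rewrite Alt_even odd_permM !odd_tperm. Qed.
Lemma sAlt : s \in 'Alt_T.
Proof. by rewrite Alt_even odd_permM !odd_tperm. Qed.

Lemma cs_ne : c * s != s * c.
Proof.
apply/eqP => /permP /(_ x0); rewrite !permM !permE /=.
by [].
Qed.

Lemma cJs : c ^ s = c^-1.
Proof.
rewrite /c conjMg !tpermJ /s !permM !permE /= tpermC.
rewrite invMg !tpermV [tperm x1 x2 * _]conjgC tpermJ !permE /=.
by [].
Qed.

Let G1 := (<[c]> <*> <[s]>)%G.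

Lemma G1Alt : G1 \subset 'Alt_T.
Proof. by rewrite join_subG !cycle_subG cAlt sAlt. Qed.

Lemma G1'cyc : cyclic G1^`(1).
Proof.
have nCs : <[s]> \subset 'N(<[c]>).
  rewrite cycle_subG; apply/normP; by rewrite -cycleJ cJs cycleV.
have sub : G1^`(1) \subset <[c]>.
  apply: der1_min.
    by rewrite join_subG normG nCs.
  rewrite quotientYidl //; apply: cyclic_abelian; apply: quotient_cyclic.
  exact: cycle_cyclic.
exact: cyclicS sub (cycle_cyclic c).
Qed.

Lemma G1_bad : s * [~ c, s] != [~ c, s] * s.
Proof.
rewrite /commg cJs.
apply/eqP => /permP /(_ x0); rewrite !permM /c !invMg !tpermV /s !permM.
by rewrite !tpermE.
Qed.

Lemma G1_mem : s \in G1 /\ [~ c, s] \in G1^`(1).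
Proof.
have cG : c \in G1 by rewrite mem_gen // inE cycle_id.
have sG : s \in G1 by rewrite mem_gen // inE cycle_id orbT.
by split => //; rewrite derg1 mem_commg.
Qed.

Lemma Alt_perfect : ('Alt_T)^`(1) = 'Alt_T.
Proof.
have /simpleP[_ simp] : simple 'Alt_T by apply: simple_Alt5; rewrite card_ord.
case: (simp _ (der_normal 1 _)) => // ab.
have : abelian 'Alt_T by apply/commG1P; rewrite -derg1 ab.
move/centsP/(_ _ (cAlt) _ (sAlt)) => com.
by have := cs_ne; rewrite com eqxx.
Qed.
End Conc.

Theorem theorem3p2 (n : nat) : 5 <= n ->
  D_realisable ('Alt_('I_n))%G /\ ~ completely_D_realisable ('Alt_('I_n))%G.
Proof.
move=> n5; have [m ->] : exists m, n = m.+4.+1.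
  by case: n n5 => [|[|[|[|[|k]]]]] // _; exists k.
split.
  exists {perm 'I_m.+4.+1}, ('Alt_('I_m.+4.+1))%G.
  by rewrite Alt_perfect isog_refl.
case=> hT [H [_ hii _]].
have [H1 _ iso1] := hii _ (G1Alt m).
have [sG gG] := G1_mem m.
exact: no_der (G1'cyc m) sG gG (G1_bad m) iso1.
Qed.
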